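(* Let $\mathfrak g=\mathfrak k\oplus\mathfrak m$ be a Pauli-spanned Cartan decomposition and let $b_1,b_2,b_3\in\tilde{\mathfrak m}$ be pairwise commuting Pauli strings. If $\tilde{\mathfrak k}^{123}$ is non-empty, then the (Hermitian) Pauli string $b_1b_2b_3$ satisfies $i\,b_1b_2b_3\in\mathfrak m$.
   Context: Pauli strings on $n$ qubits are tensor products of $I,X,Y,Z$, not all identity; two Pauli strings either commute or anticommute. A Pauli-spanned Cartan decomposition is $\mathfrak g=\mathfrak k\oplus\mathfrak m\subseteq\mathfrak{su}(2^n)$ with $\mathfrak k=\mathrm{span}_{i\mathbb R}\tilde{\mathfrak k}$, $\mathfrak m=\mathrm{span}_{i\mathbb R}\tilde{\mathfrak m}$, where $\tilde{\mathfrak k}\sqcup\tilde{\mathfrak m}$ is the set of all Pauli strings (up to phase) $\sigma$ with $i\sigma\in\mathfrak g$, and $[\mathfrak k,\mathfrak k]\subseteq\mathfrak k$, $[\mathfrak m,\mathfrak m]\subseteq\mathfrak k$, $[\mathfrak k,\mathfrak m]\subseteq\mathfrak m$. $\tilde{\mathfrak k}^{123}$ is the set of $k\in\tilde{\mathfrak k}$ anticommuting with each of $b_1,b_2,b_3$. *)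

(* Defs.v *)
From mathcomp Require Import all_boot.
Set Implicit Arguments. Unset Strict Implicit. Unset Printing Implicit Defensive.

Inductive pauli := pI | pX | pY | pZ.

(* Product of single-qubit Paulis, up to a phase in {1,-1,i,-i}. *)
Definition pmul (a b : pauli) : pauli :=
  match a, b with
  | pI, c | c, pI => c
  | pX, pX | pY, pY | pZ, pZ => pI
  | pX, pY | pY, pX => pZ
  | pY, pZ | pZ, pY => pX
  | pZ, pX | pX, pZ => pY
  end.

Definition panti (a b : pauli) : bool :=
  match a, b with
  | pX, pY | pY, pX | pY, pZ | pZ, pY | pZ, pX | pX, pZ => true
  | _, _ => false
  end.

Definition pword (n : nat) := {ffun 'I_n -> pauli}.

Definition is_pstring n (s : pword n) : Prop := exists i, s i <> pI.

Definition smul n (s t : pword n) : pword n := [ffun i => pmul (s i) (t i)].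

(* Tensor products anticommute iff an odd number of tensor factors anticommute. *)
Definition anticommute n (s t : pword n) : bool :=
  odd #|[pred i | panti (s i) (t i)]|.

Definition pcommute n (s t : pword n) : bool := ~~ anticommute s t.

(* A Pauli-spanned Cartan decomposition g = k (+) m, given by the disjoint sets
   K = k~ and M = m~ of Pauli strings, k = span_{iR} K, m = span_{iR} M.
   For Pauli strings s, t: [i s, i t] = 0 if they commute, and is a nonzero real
   multiple of i (s t) if they anticommute. Since the Pauli strings are linearly
   independent, [k,k] <= k etc. are exactly the following closure conditions. *)
Definition pauli_cartan n (K M : pword n -> Prop) : Prop :=
  (forall s, K s -> is_pstring s) /\
  (forall s, M s -> is_pstring s) /\
  (forall s, K s -> M s -> False) /\
  (forall s t, K s -> K t -> anticommute s t -> K (smul s t)) /\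
  (forall s t, M s -> M t -> anticommute s t -> K (smul s t)) /\
  (forall s t, K s -> M t -> anticommute s t -> M (smul s t)).

Definition k123 n (K : pword n -> Prop) (b1 b2 b3 : pword n) (k : pword n) : Prop :=
  K k /\ anticommute k b1 /\ anticommute k b2 /\ anticommute k b3.

(* Main.v *)
Require Import Defs.
From mathcomp Require Import all_boot.
Set Implicit Arguments. Unset Strict Implicit.

Lemma card_as_sum (I : finType) (a : pred I) : #|a| = \sum_i (a i : nat).
Proof. by rewrite -sum1_card big_mkcond /=; apply: eq_bigr => i _; rewrite unfold_in; case: (a i). Qed.

Lemma card_xor (I : finType) (a b : pred I) :
  #|[pred i | a i (+) b i]| + 2 * #|[pred i | a i && b i]| = #|a| + #|b|.
Proof.
rewrite !card_as_sum big_distrr -!big_split /=.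
by apply: eq_bigr => i _; case: (a i); case: (b i).
Qed.

Lemma odd_xor (I : finType) (a b : pred I) :
  odd #|[pred i | a i (+) b i]| = odd #|a| (+) odd #|b|.
Proof.
by have := card_xor a b => /(congr1 odd); rewrite !oddD /= addbF addbb addbF => <-.
Qed.

Lemma panti_mul a b c : panti (pmul a b) c = panti a c (+) panti b c.
Proof. by case: a; case: b; case: c. Qed.

Lemma anti_mul n (s t u : pword n) : anticommute (smul s t) u = anticommute s u (+) anticommute t u.
Proof.
rewrite /anticommute -odd_xor; congr (odd _); apply: eq_card => i.
by rewrite !inE /smul ffunE panti_mul.
Qed.

Lemma anti_sym n (s t : pword n) : anticommute s t = anticommute t s.
Proof. rewrite /anticommute; congr (odd _); apply: eq_card => i; rewrite !inE. by case: (s i); case: (t i). Qed.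

Lemma anti_self n (s : pword n) : anticommute s s = false.
Proof. rewrite /anticommute (@eq_card _ _ pred0) ?card0 // => i; rewrite !inE. by case: (s i). Qed.

Theorem theoremC2 (n : nat) (K M : pword n -> Prop) :
  pauli_cartan K M ->
  forall b1 b2 b3 : pword n,
    M b1 -> M b2 -> M b3 ->
    pcommute b1 b2 -> pcommute b1 b3 -> pcommute b2 b3 ->
    (exists k, k123 K b1 b2 b3 k) ->
    M (smul b1 (smul b2 b3)).
Proof.
move=> [_ [_ [_ [_ [HMM HKM]]]]] b1 b2 b3 M1 M2 M3 c12 c13 c23 [k [Kk [a1 [a2 a3]]]].
move: c12 c13 c23; rewrite /pcommute => /negbTE c12 /negbTE c13 /negbTE c23.
have m1 := HKM _ _ Kk M1 a1.
have k2 : K (smul (smul k b1) b2).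
  by apply: HMM => //; rewrite anti_mul a2 c12.
have m3 : M (smul (smul (smul k b1) b2) b3).
  by apply: HKM => //; rewrite !anti_mul a3 c13 c23.
have := HKM _ _ Kk m3.
have -> : smul k (smul (smul (smul k b1) b2) b3) = smul b1 (smul b2 b3).
  by apply/ffunP => i; rewrite !ffunE; case: (k i); case: (b1 i); case: (b2 i); case: (b3 i).
apply; rewrite !(anti_sym k) in a1 a2 a3 *.
by rewrite !anti_mul anti_self a1 a2 a3.
Qed.
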